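(* Let $r\in\mathbb{N}_0$. In a network with a total of $N$ rank-$K$ maxout units, the number of $r$-partial activation patterns satisfies $|\mathcal P_r|\le\binom{rK}{2r}\binom{N}{r}K^{N-r}$, and the number of $r$-partial activation sub-patterns satisfies $|\mathcal S_r|\le\binom{rK}{2r}\binom{N}{r}$.
   Context: An activation pattern of a network with $N$ rank-$K$ maxout units (indexed by $z\in[N]$) is an assignment of a nonempty set $J_z\subseteq[K]$ to each unit; it is $r$-partial if $\sum_{z\in[N]}(|J_z|-1)=r$. $\mathcal P_r$ is the set of $r$-partial activation patterns. An activation sub-pattern is obtained from a pattern by disregarding all $J_z$ with $|J_z|=1$, i.e. it is a list $(J_z)_{z\in Z}$, $Z\subseteq[N]$, with $|J_z|\ge2$; $\mathcal S_r$ is the set of sub-patterns with $\sum_{z\in Z}(|J_z|-1)=r$.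
   Formalization: Both bounds, on $|\mathcal P_r|$ and on $|\mathcal S_r|$, hold for r ≤ N only, that is, when r does not exceed the total number N of maxout units. The statement above fails without it. *)

(* Defs.v *)
From mathcomp Require Import all_boot.
Set Implicit Arguments. Unset Strict Implicit. Unset Printing Implicit Defensive.

(* Units are indexed by 'I_N, maxout ranks by 'I_K.  An activation pattern
   assigns to each unit z a nonempty set J_z of arg-max indices. *)
Definition activation_pattern (N K : nat) := {ffun 'I_N -> {set 'I_K}}.

Definition partial_patterns (N K r : nat) : {set {ffun 'I_N -> {set 'I_K}}} :=
  [set J : {ffun 'I_N -> {set 'I_K}} |
     [forall z, J z != set0] && (\sum_(z < N) (#|J z| - 1) == r)].

(* An activation sub-pattern (J_z)_{z in Z}, Z a subset of [N], |J_z| >= 2,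
   is encoded as a partial function: J z = Some J_z for z in Z, None otherwise. *)
Definition opt_excess (K : nat) (o : option {set 'I_K}) : nat :=
  if o is Some A then #|A| - 1 else 0.

Definition partial_subpatterns (N K r : nat)
  : {set {ffun 'I_N -> option {set 'I_K}}} :=
  [set J : {ffun 'I_N -> option {set 'I_K}} |
     [forall z, if J z is Some A then 2 <= #|A| else true]
     && (\sum_(z < N) opt_excess (J z) == r)].

(* Main.v *)
Require Import Defs.
From mathcomp Require Import all_boot zify.

Lemma cover_bound (T U : finType) (X : {set T}) (Ws : {set U}) (P : T -> U -> bool) c :
  (forall x, x \in X -> exists2 W, W \in Ws & P x W) ->
  (forall W, W \in Ws -> #|[set x in X | P x W]| <= c) -> #|X| <= #|Ws| * c.
Proof.
move=> hcov hb.
apply: (@leq_trans (\sum_(x in X) \sum_(W in Ws) (P x W : nat))).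
  rewrite -sum1_card; apply: leq_sum => x xX.
  have [W WWs PW] := hcov x xX.
  by rewrite (bigD1 W) //= PW.
rewrite exchange_big /= -sum_nat_const; apply: leq_sum => W WWs.
apply: leq_trans (hb W WWs).
rewrite -sum1_card. rewrite big_mkcond /= [X in _ <= X]big_mkcond /=.
apply: leq_sum => x _; rewrite !inE.
by case: (x \in X); case: (P x W).
Qed.

Lemma card_sect N K (W : {set 'I_N}) (E : 'I_N -> {set 'I_K}) :
  #|[set p : 'I_N * 'I_K | (p.1 \in W) && (p.2 \in E p.1)]| = \sum_(z in W) #|E z|.
Proof.
rewrite -sum1_card.
transitivity (\sum_(z in W) \sum_(a in E z) 1).
  rewrite pair_big_dep /=; apply: eq_bigl => p; by rewrite inE.
by apply: eq_bigr => z _; rewrite sum1_card.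
Qed.

Lemma core N K (T U : finType) (X : {set T}) (H : {pred U}) (h : T -> U)
  (E : T -> 'I_N -> {set 'I_K}) (W : {set 'I_N}) r :
  #|W| = r -> (forall x, x \in X -> h x \in H) ->
  (forall x, x \in X -> \sum_(z in W) #|E x z| = 2 * r) ->
  {in X &, injective (fun x => (h x, [set p : 'I_N * 'I_K | (p.1 \in W) && (p.2 \in E x p.1)]))} ->
  #|X| <= #|H| * 'C(r * K, 2 * r).
Proof.
move=> hW hH hE hinj.
rewrite -(card_in_imset hinj).
set D := [set A : {set 'I_N * 'I_K} | (A \subset setX W setT) && (#|A| == 2 * r)].
have -> : 'C(r * K, 2 * r) = #|D| by rewrite cards_draws cardsX cardsT card_ord hW.
have -> : #|H| = #|[set u in H]| by apply: eq_card => u; rewrite inE.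
rewrite -cardsX.
apply: subset_leq_card; apply/subsetP => y /imsetP [x xX ->].
rewrite !inE /= hH //= card_sect hE // eqxx andbT.
by apply/subsetP => p; rewrite !inE => /andP [-> _].
Qed.

Lemma ext_set (T : finType) (Z : {set T}) k :
  #|Z| <= k -> k <= #|T| -> exists W : {set T}, Z \subset W /\ #|W| = k.
Proof.
move=> h1; rewrite -(subnK h1); elim: (k - #|Z|) => [|d IH] hk.
  by exists Z.
have [W [ZW cW]] := IH (ltnW hk).
have : #|W| < #|T| by rewrite cW.
move=> lt.
have : 0 < #|~: W| by have e := cardsC W; lia.
rewrite card_gt0 => /set0Pn [x]; rewrite inE => xW.
exists (x |: W); split; first by apply: subset_trans ZW (subsetUr _ _).
by rewrite cardsU1 xW cW.
Qed.

Lemma part1 N K r (hrN : r <= N) :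
  #|partial_patterns N K r| <= 'C(r * K, 2 * r) * 'C(N, r) * K ^ (N - r).
Proof.
set X := partial_patterns N K r.
pose Ws := [set W : {set 'I_N} | #|W| == r].
pose P := fun (J : {ffun 'I_N -> {set 'I_K}}) (W : {set 'I_N}) =>
  [forall z, (z \notin W) ==> (#|J z| == 1)].
have cWs : #|Ws| = 'C(N, r) by rewrite card_draws card_ord.
suff : #|X| <= #|Ws| * (K ^ (N - r) * 'C(r * K, 2 * r)).
  by rewrite cWs => h; apply: (leq_trans h); rewrite mulnC [X in _ <= X]mulnC mulnA leqnn.
apply: (@cover_bound _ _ X Ws P).
- move=> J; rewrite inE => /andP [/forallP ne /eqP sumr].
  set Z := [set z | #|J z| != 1].
  have cZ : #|Z| <= r.
    rewrite -sumr -sum1_card [X in _ <= X](bigID (fun z => z \in Z)) /=.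
    apply: leq_trans (leq_addr _ _); apply: leq_sum => z; rewrite inE => h.
    have := ne z; rewrite -cards_eq0; move: h; case: #|J z| => [|[|n]] //.
  have hN : r <= #|'I_N| by rewrite card_ord.
  have [W [ZW cW]] := @ext_set _ Z r cZ hN.
  exists W; first by rewrite inE cW.
  apply/forallP => z; apply/implyP => zW.
  case: eqP => // /eqP h; have : z \in Z by rewrite inE h.
  by move/(subsetP ZW); rewrite (negbTE zW).
- move=> W; rewrite inE => /eqP cW.
  have := @core N K _ _ [set x in X | P x W]
     (pffun_on set0 (~: W) [set A : {set 'I_K} | #|A| == 1])
     (fun J => [ffun z => if z \in W then set0 else J z]) (fun J => J) W r cW.
  have cH : #|pffun_on set0 (~: W) [set A : {set 'I_K} | #|A| == 1]| = K ^ (N - r).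
    rewrite card_pffun_on card_draws card_ord bin1.
    have := cardsC W; rewrite card_ord cW => e; congr (_ ^ _); lia.
  rewrite cH; apply.
  + move=> J; rewrite inE => /andP [_ PJ]; apply/pffun_onP; split.
      apply/subsetP => z; rewrite !inE ffunE; case: (z \in W) => //=; by rewrite eqxx.
    move=> _ /imageP [z zW ->]; rewrite ffunE inE in zW *; rewrite (negbTE zW) inE.
    exact: (implyP (forallP PJ z) zW).
  + move=> J; rewrite !inE => /andP [/andP [/forallP ne /eqP sumr] PJ].
    have e1 : \sum_(z < N) (#|J z| - 1) = \sum_(z in W) (#|J z| - 1).
      rewrite (bigID (fun z => z \in W)) /= [X in _ + X]big1 ?addn0 // => z zW.
      by have := implyP (forallP PJ z) zW; move/eqP->.
    transitivity (\sum_(z in W) ((#|J z| - 1) + 1)).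
      apply: eq_bigr => z _; have := ne z; rewrite -cards_eq0 => h; by rewrite subnK // lt0n.
    rewrite big_split /= sum1_card -e1 sumr cW; lia.
  + move=> J1 J2; rewrite !inE => /andP[_ P1] /andP[_ P2] [e1 e2]; apply/ffunP => z.
    case zW: (z \in W).
      apply/setP => a; have := congr1 (fun S : {set 'I_N * 'I_K} => (z, a) \in S) e2; by rewrite /= !inE zW.
    by have := congr1 (fun f : {ffun 'I_N -> {set 'I_K}} => f z) e1; rewrite /= !ffunE zW.
Qed.

Lemma sect0_le1 K : #|[set a : 'I_K | val a == 0]| <= 1.
Proof.
apply/card_le1_eqP => a b; rewrite !inE => /eqP ha /eqP hb; apply: val_inj; by rewrite ha hb.
Qed.

Lemma sect0_eq1 K : 0 < K -> #|[set a : 'I_K | val a == 0]| = 1.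
Proof.
move=> K0; apply/eqP; rewrite eqn_leq sect0_le1 /= card_gt0; apply/set0Pn.
by exists (Ordinal K0); rewrite inE.
Qed.

Lemma part2 N K r (hrN : r <= N) :
  #|partial_subpatterns N K r| <= 'C(r * K, 2 * r) * 'C(N, r).
Proof.
set X := partial_subpatterns N K r.
pose Ws := [set W : {set 'I_N} | #|W| == r].
pose P := fun (J : {ffun 'I_N -> option {set 'I_K}}) (W : {set 'I_N}) =>
  [forall z, (z \notin W) ==> (J z == None)].
have cWs : #|Ws| = 'C(N, r) by rewrite card_draws card_ord.
suff : #|X| <= #|Ws| * (1 * 'C(r * K, 2 * r)).
  by rewrite cWs mul1n mulnC.
apply: (@cover_bound _ _ X Ws P).
- move=> J; rewrite inE => /andP [/forallP ne /eqP sumr].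
  set Z := [set z | J z != None].
  have cZ : #|Z| <= r.
    rewrite -sumr -sum1_card [X in _ <= X](bigID (fun z => z \in Z)) /=.
    apply: leq_trans (leq_addr _ _); apply: leq_sum => z; rewrite inE => h.
    have := ne z; move: h; case: (J z) => //= A _ h2.
    by rewrite subn_gt0.
  have hN : r <= #|'I_N| by rewrite card_ord.
  have [W [ZW cW]] := @ext_set _ Z r cZ hN.
  exists W; first by rewrite inE cW.
  apply/forallP => z; apply/implyP => zW.
  case: eqP => // /eqP h; have : z \in Z by rewrite inE h.
  by move/(subsetP ZW); rewrite (negbTE zW).
- move=> W; rewrite inE => /eqP cW.
  have := @core N K _ _ [set x in X | P x W] [set: unit] (fun _ => tt)
     (fun J z => if J z is Some A then A else [set a : 'I_K | val a == 0]) W r cW.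
  rewrite cardsT card_unit; apply.
  + by move=> J _; rewrite inE.
  + move=> J; rewrite !inE => /andP [/andP [/forallP ne /eqP sumr] PJ].
    have e1 : \sum_(z < N) opt_excess (J z) = \sum_(z in W) opt_excess (J z).
      rewrite (bigID (fun z => z \in W)) /= [X in _ + X]big1 ?addn0 // => z zW.
      by have := implyP (forallP PJ z) zW; move/eqP->.
    transitivity (\sum_(z in W) (opt_excess (J z) + 1)).
      apply: eq_bigr => z zW; have := ne z; case: (J z) => [A|] /= h.
        by rewrite subnK // ltnW.
      rewrite sect0_eq1 //.
      have : 0 < \sum_(z < N) opt_excess (J z).
        by rewrite sumr -cW card_gt0; apply/set0Pn; exists z.
      case: (pickP (fun z' => 0 < opt_excess (J z'))) => [z' hz'|none]; last first.
        by rewrite big1 // => z' _; have := none z'; case: (opt_excess _).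
      move: hz' (ne z'); case: (J z') => //= A hA _ _.
      have hm := max_card A; rewrite card_ord in hm; apply: leq_trans hm; move: hA; by case: #|A|.
    rewrite big_split /= sum1_card -e1 sumr cW; lia.
  + move=> J1 J2; rewrite !inE => /andP[/andP [/forallP n1 _] P1] /andP[/andP [/forallP n2 _] P2] [e2];
      apply/ffunP => z.
    case zW: (z \in W); last first.
      have := implyP (forallP P1 z); have := implyP (forallP P2 z).
      by rewrite zW => /(_ isT) /eqP -> /(_ isT) /eqP ->.
    have e3 : (if J1 z is Some A then A else [set a : 'I_K | val a == 0]) =
              (if J2 z is Some A then A else [set a : 'I_K | val a == 0]).
      apply/setP => a.
      have := congr1 (fun S : {set 'I_N * 'I_K} => (z, a) \in S) e2; by rewrite /= !inE zW.
    move: e3 (n1 z) (n2 z) (sect0_le1 K).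
    case: (J1 z) => [A|]; case: (J2 z) => [B|] //=.
    * by move=> ->.
    * by move=> -> h1 _ h3; have := leq_trans h1 h3.
    * by move=> <- _ h1 h3; have := leq_trans h1 h3.
Qed.

Theorem lemma3 (N K r : nat) (hrN : r <= N) :
  #|partial_patterns N K r| <= 'C(r * K, 2 * r) * 'C(N, r) * K ^ (N - r)
  /\ #|partial_subpatterns N K r| <= 'C(r * K, 2 * r) * 'C(N, r).
Proof. by split; [apply: part1 | apply: part2]. Qed.
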